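(* On the half-duplex $(a,b,c)$-relay channel, static QMF achieves the full-duplex DMT $d_{f.d.}(r)=(\min(a,b)-r)^++(c-r)^+$ (and is therefore DMT optimal) in each of the following cases: (i) $c\ge\min(a,b)$ (for all $r\ge 0$); (ii) $c<\min(a,b)$ and $0\le r\le c$. That is, in these cases $d_{QMF}(r)=d_{f.d.}(r)$.
   Context: The $(a,b,c)$-relay channel: source $S$, relay $R$, destination $D$; i.i.d. $\mathcal{CN}(0,1)$ quasi-static gains $h_{sr},h_{rd},h_{sd}$ known only at receivers; average SNRs $\rho^a,\rho^b,\rho^c$ on S-R, R-D, S-D. Exponential orders $\alpha,\beta,\gamma$ of $|h_{sr}|^2\rho^a,|h_{rd}|^2\rho^b,|h_{sd}|^2\rho^c$ (e.g. $\alpha=\lim_{\rho\to\infty}\log(1+|h_{sr}|^2\rho^a)/\log\rho$). The full-duplex DMT is $d_{f.d.}(r)=\min\{a+b+c-\alpha-\beta-\gamma:\min(\max(\alpha,\gamma),\max(\beta,\gamma))\le r,\ \alpha\in[0,a],\beta\in[0,b],\gamma\in[0,c]\}$, an upper bound on the half-duplex DMT. Static QMF (relay listens half the time, quantizes at noise level, maps to a random codeword and transmits in the other half, fixed schedule) has DMT $d_{QMF}(r)=\min\{a+b+c-\alpha-\beta-\gamma: r_{h.d.}(1/2)\le r,\ \alpha\in[0,a],\beta\in[0,b],\gamma\in[0,c]\}$ where $r_{h.d.}(t)=\min\{t\max(\alpha,\gamma)+(1-t)\gamma,\ t\gamma+(1-t)\max(\beta,\gamma)\}$. $x^+=\max(x,0)$.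 *)

(* Defs.v *)
From Stdlib Require Import Reals Lra.
Open Scope R_scope.

Definition posp (x : R) : R := Rmax x 0.

Definition is_min3 (P : R -> R -> R -> Prop) (f : R -> R -> R -> R) (v : R) : Prop :=
  (exists al be ga, P al be ga /\ f al be ga = v) /\
  (forall al be ga, P al be ga -> v <= f al be ga).

Definition dmt_obj (a b c : R) (al be ga : R) : R := a + b + c - al - be - ga.

Definition in_box (a b c al be ga : R) : Prop :=
  0 <= al <= a /\ 0 <= be <= b /\ 0 <= ga <= c.

Definition r_hd (t al be ga : R) : R :=
  Rmin (t * Rmax al ga + (1 - t) * ga) (t * ga + (1 - t) * Rmax be ga).

Definition fd_feasible (a b c r al be ga : R) : Prop :=
  in_box a b c al be ga /\ Rmin (Rmax al ga) (Rmax be ga) <= r.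

Definition qmf_feasible (a b c r al be ga : R) : Prop :=
  in_box a b c al be ga /\ r_hd (1/2) al be ga <= r.

Definition d_fd_is (a b c r v : R) : Prop :=
  is_min3 (fd_feasible a b c r) (dmt_obj a b c) v.

Definition d_QMF_is (a b c r v : R) : Prop :=
  is_min3 (qmf_feasible a b c r) (dmt_obj a b c) v.

(* Main.v *)
Require Import Defs.
From Stdlib Require Import Reals Lra.
Open Scope R_scope.

Ltac kill :=
  unfold posp, r_hd, in_box, dmt_obj in *;
  repeat match goal with
  | H : context[Rmax ?x ?y] |- _ =>
      destruct (Rle_or_lt x y);
      [rewrite (Rmax_right x y) in H by lra | rewrite (Rmax_left x y) in H by lra]
  | H : context[Rmin ?x ?y] |- _ =>
      destruct (Rle_or_lt x y);
      [rewrite (Rmin_left x y) in H by lra | rewrite (Rmin_right x y) in H by lra]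
  | |- context[Rmax ?x ?y] =>
      destruct (Rle_or_lt x y);
      [rewrite (Rmax_right x y) by lra | rewrite (Rmax_left x y) by lra]
  | |- context[Rmin ?x ?y] =>
      destruct (Rle_or_lt x y);
      [rewrite (Rmin_left x y) by lra | rewrite (Rmin_right x y) by lra]
  end; lra.

Theorem corollary1 (a b c r : R) :
  0 <= a -> 0 <= b -> 0 <= c -> 0 <= r ->
  (Rmin a b <= c \/ (c < Rmin a b /\ r <= c)) ->
  d_fd_is a b c r (posp (Rmin a b - r) + posp (c - r)) /\
  d_QMF_is a b c r (posp (Rmin a b - r) + posp (c - r)).
Proof.
  intros Ha Hb Hc Hr Hcase.
  assert (W : exists al be ga, fd_feasible a b c r al be ga /\
            dmt_obj a b c al be ga = posp (Rmin a b - r) + posp (c - r)).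
  { destruct (Rle_or_lt a b) as [Hab|Hab].
    - exists (Rmin a r), b, (Rmin c r). unfold fd_feasible; split; [split|]; kill.
    - exists a, (Rmin b r), (Rmin c r). unfold fd_feasible; split; [split|]; kill. }
  split; split.
  - exact W.
  - intros al be ga [Hbox Hf]. kill.
  - destruct W as (al & be & ga & [Hbox Hf] & He).
    exists al, be, ga; split; [split; [exact Hbox|]|exact He]. kill.
  - intros al be ga [Hbox Hf]. kill.
Qed.
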